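(* Let $A\overset{i}{\to}U\overset{j}{\to}G$ be an extension of a semilattice of groups $A$ by a group $G$, and let $S$ be an inverse semigroup with epimorphisms $\pi:U\to S$, $\kappa:S\to G$ such that $A\overset{i}{\to}U\overset{\pi}{\to}S$ is an extension of $A$ by $S$ and $j=\kappa\circ\pi$ (so that the fibres $\kappa^{-1}(x)$ are exactly the $\sigma$-classes of $S$). Then for $x\in G$, the $\sigma$-class $\kappa^{-1}(x)$ has a maximum element (with respect to the natural partial order of $S$) if and only if $j^{-1}(x)=u_x\,i(A)$ for some $u_x\in j^{-1}(x)$.
   Context: A semilattice of groups is an inverse semigroup whose idempotents are central. An extension of $A$ by a group $G$ is an inverse semigroup $U$ with a monomorphism $i:A\to U$ and an epimorphism $j:U\to G$ with $i(A)=j^{-1}(1)$. An extension of $A$ by an inverse semigroup $S$ is an inverse semigroup $U$ with a monomorphism $i:A\to U$ and an idempotent-separating epimorphism $\pi:U\to S$ with $i(A)=\pi^{-1}(E(S))$. $\sigma$ is the minimum group congruence on $S$ ($(s,t)\in\sigma$ iff $es=et$ for some $e\in E(S)$). *)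

(* Defs.v *)
Record InverseSemigroup := {
  carrier :> Type;
  mul : carrier -> carrier -> carrier;
  inv : carrier -> carrier;
  mul_assoc : forall a b c, mul a (mul b c) = mul (mul a b) c;
  inv_unique : forall a b, (mul (mul a b) a = a /\ mul (mul b a) b = b) <-> b = inv a
}.

Arguments mul {_} _ _.
Arguments inv {_} _.

Record Group := {
  gcarrier :> Type;
  gmul : gcarrier -> gcarrier -> gcarrier;
  ginv : gcarrier -> gcarrier;
  gone : gcarrier;
  gmul_assoc : forall a b c, gmul a (gmul b c) = gmul (gmul a b) c;
  gmul1 : forall a, gmul a gone = a;
  g1mul : forall a, gmul gone a = a;
  gmulV : forall a, gmul a (ginv a) = gone;
  gmulVl : forall a, gmul (ginv a) a = gone
}.

Arguments gmul {_} _ _.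
Arguments ginv {_} _.
Arguments gone {_}.

Definition idempotent {S : InverseSemigroup} (e : S) : Prop := mul e e = e.

Definition semilattice_of_groups (S : InverseSemigroup) : Prop :=
  forall e s : S, idempotent e -> mul e s = mul s e.

Definition nat_le {S : InverseSemigroup} (s t : S) : Prop :=
  exists e : S, idempotent e /\ s = mul e t.

Definition is_hom {S T : InverseSemigroup} (f : S -> T) : Prop :=
  forall a b, f (mul a b) = mul (f a) (f b).

Definition is_hom_to_group {S : InverseSemigroup} {G : Group} (f : S -> G) : Prop :=
  forall a b, f (mul a b) = gmul (f a) (f b).

Definition injective {X Y : Type} (f : X -> Y) : Prop := forall x y, f x = f y -> x = y.
Definition surjective {X Y : Type} (f : X -> Y) : Prop := forall y, exists x, f x = y.

Definition idempotent_separating {S T : InverseSemigroup} (f : S -> T) : Prop :=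
  forall e e' : S, idempotent e -> idempotent e' -> f e = f e' -> e = e'.

Definition group_extension (A U : InverseSemigroup) (G : Group)
    (i : A -> U) (j : U -> G) : Prop :=
  is_hom i /\ injective i /\ is_hom_to_group j /\ surjective j /\
  (forall u : U, j u = gone <-> exists a : A, u = i a).

Definition semigroup_extension (A U S : InverseSemigroup)
    (i : A -> U) (pi : U -> S) : Prop :=
  is_hom i /\ injective i /\ is_hom pi /\ surjective pi /\
  idempotent_separating pi /\
  (forall u : U, idempotent (pi u) <-> exists a : A, u = i a).

(* Main.v *)
Require Import Defs.
From Stdlib Require Import Setoid.

Section IS.
Variable S : InverseSemigroup.
Local Notation "a * b" := (@mul S a b).

Lemma lift (l r : S) : l = r -> forall c, c * l = c * r.
Proof. intros; subst; auto. Qed.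

Ltac norm := repeat rewrite mul_assoc.
Ltac normin H := repeat setoid_rewrite mul_assoc in H.

Lemma inv_l (a : S) : a * inv a * a = a.
Proof. destruct (proj2 (inv_unique S a (inv a)) eq_refl); auto. Qed.
Lemma inv_r (a : S) : inv a * a * inv a = inv a.
Proof. destruct (proj2 (inv_unique S a (inv a)) eq_refl); auto. Qed.
Lemma inv_eq (a b : S) : a * b * a = a -> b * a * b = b -> b = inv a.
Proof. intros; apply inv_unique; auto. Qed.
Lemma inv_inv (a : S) : inv (inv a) = a.
Proof. symmetry; apply inv_eq; [apply inv_r | apply inv_l]. Qed.
Lemma idem_inv (e : S) : idempotent e -> inv e = e.
Proof. unfold idempotent; intro H; symmetry; apply inv_eq; rewrite H, H; auto. Qed.

Lemma idem_prod (e f : S) : idempotent e -> idempotent f -> idempotent (e * f).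
Proof.
  unfold idempotent; intros He Hf.
  set (x := inv (e * f)).
  assert (Hx1 : e * f * x * (e * f) = e * f) by apply inv_l.
  assert (Hx2 : x * (e * f) * x = x) by apply inv_r.
  normin Hx1. normin Hx2.
  pose proof (lift _ _ Hx2) as K2. normin K2.
  pose proof (lift _ _ He) as Ke. normin Ke.
  pose proof (lift _ _ Hf) as Kf. normin Kf.
  assert (H1 : f * x * e = x).
  { unfold x at 2. apply inv_eq; norm.
    - rewrite Kf, Ke. exact Hx1.
    - rewrite Ke, Kf. rewrite K2. reflexivity. }
  assert (Hxx : x * x = x).
  { transitivity (f * x * e * (f * x * e)); [rewrite H1; auto|].
    norm. rewrite K2. exact H1. }
  assert (Hix : inv x = x) by (apply idem_inv; exact Hxx).
  assert (Hefx : e * f = x) by (transitivity (inv (inv (e*f))); [symmetry; apply inv_inv | exact Hix]).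
  rewrite Hefx. exact Hxx.
Qed.

Lemma idem_comm (e f : S) : idempotent e -> idempotent f -> e * f = f * e.
Proof.
  intros He Hf.
  pose proof (idem_prod e f He Hf) as Hef.
  pose proof (idem_prod f e Hf He) as Hfe.
  unfold idempotent in *.
  rewrite <- (idem_inv (e * f) Hef).
  symmetry; apply inv_eq; norm.
  - assert (K : forall c, c * f * f = c * f) by (intro c; rewrite <- mul_assoc, Hf; auto).
    assert (K' : forall c, c * e * e = c * e) by (intro c; rewrite <- mul_assoc, He; auto).
    rewrite K, K'. rewrite <- Hef at 2. norm. auto.
  - assert (K : forall c, c * f * f = c * f) by (intro c; rewrite <- mul_assoc, Hf; auto).
    assert (K' : forall c, c * e * e = c * e) by (intro c; rewrite <- mul_assoc, He; auto).
    rewrite K', K. rewrite <- Hfe at 2. norm. auto.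
Qed.

Lemma idem_rinv (a : S) : idempotent (a * inv a).
Proof. unfold idempotent; norm; rewrite inv_l; auto. Qed.
Lemma idem_linv (a : S) : idempotent (inv a * a).
Proof. unfold idempotent; norm; rewrite inv_r; auto. Qed.

Lemma inv_mul (a b : S) : inv (a * b) = inv b * inv a.
Proof.
  symmetry; apply inv_eq; norm.
  - assert (K : forall c, c * b * inv b * inv a * a = c * inv a * a * b * inv b).
    { intro c. generalize (lift _ _ (idem_comm _ _ (idem_rinv b) (idem_linv a)) c). norm. auto. }
    rewrite K, inv_l.
    assert (K2 : forall c, c * b * inv b * b = c * b).
    { intro c. generalize (lift _ _ (inv_l b) c). norm. auto. }
    rewrite K2. auto.
  - assert (K : forall c, c * inv a * a * b * inv b = c * b * inv b * inv a * a).
    { intro c. generalize (lift _ _ (idem_comm _ _ (idem_linv a) (idem_rinv b)) c). norm. auto. }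
    rewrite K, inv_r.
    assert (K2 : forall c, c * inv a * a * inv a = c * inv a).
    { intro c. generalize (lift _ _ (inv_r a) c). norm. auto. }
    rewrite K2. auto.
Qed.

Lemma le_H (f u : S) : idempotent f -> (f * u) * inv (f * u) = u * inv u -> f * u = u.
Proof.
  intros Hf H.
  transitivity (u * inv u * u); [| apply inv_l].
  rewrite <- H, inv_mul, (idem_inv f Hf). norm.
  assert (K : forall c, c * u * inv u * f = c * f * u * inv u).
  { intro c. generalize (lift _ _ (idem_comm _ _ (idem_rinv u) Hf) c). norm. auto. }
  rewrite K. unfold idempotent in Hf. rewrite Hf.
  assert (K2 : forall c, c * u * inv u * u = c * u).
  { intro c. generalize (lift _ _ (inv_l u) c). norm. auto. }
  rewrite K2. auto.
Qed.

End IS.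

Ltac norm := repeat rewrite mul_assoc.

Lemma hom_inv {S T : InverseSemigroup} (f : S -> T) : is_hom f -> forall a, f (inv a) = inv (f a).
Proof.
  intros Hf a. apply inv_eq; rewrite <- !Hf; [rewrite inv_l | rewrite inv_r]; auto.
Qed.

Lemma hom_idem {S T : InverseSemigroup} (f : S -> T) : is_hom f -> forall e, idempotent e -> idempotent (f e).
Proof. unfold idempotent; intros Hf e He; rewrite <- Hf, He; auto. Qed.

Lemma group_inv_uniq (G : Group) (g h : G) : gmul (gmul g h) g = g -> h = ginv g.
Proof.
  intro H.
  transitivity (gmul (gmul (ginv g) (gmul (gmul g h) g)) (ginv g)).
  - rewrite !gmul_assoc, gmulVl, g1mul, <- (gmul_assoc _ h g), gmulV, gmul1. auto.
  - rewrite H, gmulVl, g1mul. auto.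
Qed.

Lemma ghom_inv {S : InverseSemigroup} {G : Group} (j : S -> G) : is_hom_to_group j -> forall a, j (inv a) = ginv (j a).
Proof.
  intros Hj a. apply group_inv_uniq. rewrite <- !Hj, inv_l. auto.
Qed.

Theorem proposition4p8 (A U S : InverseSemigroup) (G : Group)
    (i : A -> U) (j : U -> G) (pi : U -> S) (kappa : S -> G) :
  semilattice_of_groups A ->
  group_extension A U G i j ->
  semigroup_extension A U S i pi ->
  is_hom_to_group kappa -> surjective kappa ->
  (forall u : U, j u = kappa (pi u)) ->
  forall x : G,
    (exists m : S, kappa m = x /\ forall s : S, kappa s = x -> nat_le s m) <->
    (exists ux : U, j ux = x /\
       forall u : U, j u = x <-> exists a : A, u = mul ux (i a)).
Proof.
  intros _ HjExt HpiExt Hk Hks Hjk x.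
  destruct HjExt as [Hi [Hiinj [Hj [Hjs Hker]]]].
  destruct HpiExt as [_ [_ [Hpi [Hpis [Hsep Hidem]]]]].
  assert (jgone : forall a, j (i a) = gone) by (intro a; apply Hker; eauto).
  split.
  - intros [m [Hm Hmax]]. destruct (Hpis m) as [ux Hux].
    assert (Hjux : j ux = x) by (rewrite Hjk, Hux; auto).
    exists ux. split; [exact Hjux|]. intro u; split.
    + intro Hu.
      assert (Hju : j (mul (inv ux) u) = gone)
        by (rewrite Hj, (ghom_inv j Hj), Hjux, Hu, gmulVl; auto).
      destruct (proj1 (Hker _) Hju) as [a Ha]. exists a. rewrite <- Ha.
      rewrite mul_assoc. symmetry. apply le_H; [apply idem_rinv|].
      destruct (Hmax (pi u)) as [e [He Hpu]]; [rewrite <- Hjk; auto|].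
      assert (Hpv : pi (mul (mul ux (inv ux)) u) = pi u).
      { rewrite !Hpi, (hom_inv pi Hpi), Hux, Hpu. norm.
        rewrite (idem_comm _ _ _ (idem_rinv _ m) He).
        rewrite <- mul_assoc, inv_l. auto. }
      apply Hsep; try apply idem_rinv.
      rewrite (Hpi (mul (mul ux (inv ux)) u)), (Hpi u (inv u)), !(hom_inv pi Hpi), Hpv. auto.
    + intros [a ->]. rewrite Hj, jgone, Hjux, gmul1. auto.
  - intros [ux [Hux Hiff]]. exists (pi ux). split; [rewrite <- Hjk; auto|].
    intros s Hs. destruct (Hpis s) as [u <-].
    assert (Hu : j u = x) by (rewrite Hjk; auto).
    destruct (proj1 (Hiff u) Hu) as [a ->].
    rewrite Hpi.
    assert (Hf : idempotent (pi (i a))) by (apply Hidem; eauto).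
    set (m := pi ux) in *. set (f := pi (i a)) in *.
    exists (mul (mul m f) (inv m)). split.
    + unfold idempotent. norm.
      assert (K : forall c, mul (mul (mul c (inv m)) m) f = mul (mul (mul c f) (inv m)) m).
      { intro c. generalize (lift _ _ _ (idem_comm _ _ _ (idem_linv _ m) Hf) c). norm. auto. }
      rewrite K.
      assert (K2 : forall c, mul (mul c f) f = mul c f) by (intro c; rewrite <- mul_assoc, Hf; auto).
      rewrite K2.
      assert (K3 : forall c, mul (mul (mul c (inv m)) m) (inv m) = mul c (inv m)).
      { intro c. generalize (lift _ _ _ (inv_r _ m) c). norm. auto. }
      rewrite K3. auto.
    + norm.
      assert (K : forall c, mul (mul (mul c f) (inv m)) m = mul (mul (mul c (inv m)) m) f).
      { intro c. generalize (lift _ _ _ (idem_comm _ _ _ Hf (idem_linv _ m)) c). norm. auto. }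
      rewrite K, inv_l. auto.
Qed.
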